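(* Let $n\ge2$, $h=0$ and $\epsilon\in[-1,1]$. For $0\le p\le 2n$, $$\min_{\sigma\in\mathcal C(p)}H(\sigma)=\begin{cases}n-(p-n)^2-p^2-\epsilon(n-2p) & 0\le p\le n,\\ n-(2n-p)^2-(p-n)^2-\epsilon(2p-3n) & n\le p\le 2n.\end{cases}$$ Moreover, for $0\le p\le n$ this minimum is attained on $C(p,0,0)$ and on $C(0,p,0)$, and for $n\le p\le 2n$ it is attained on $C(n,p-n,p-n)$ and on $C(p-n,n,p-n)$.
   Context: The graph $\mathcal G(2,n)$ has vertex set $V=V^{(1)}\cup V^{(2)}$ with $V^{(1)}=\{1,\dots,n\}$, $V^{(2)}=\{n+1,\dots,2n\}$; its edge set is $E=E_{\mathrm{int}}\cup E_{\mathrm{cross}}$, where $E_{\mathrm{int}}$ consists of all pairs of distinct vertices in the same $V^{(k)}$ and $E_{\mathrm{cross}}=\{\{i,i+n\}:1\le i\le n\}$. For $\sigma\in\{-1,+1\}^V$, $H(\sigma)=-\sum_{\{i,j\}\in E_{\mathrm{int}}}\sigma_i\sigma_j-\epsilon\sum_{\{i,j\}\in E_{\mathrm{cross}}}\sigma_i\sigma_j-h\sum_{i\in V}\sigma_i$. $C(p_1,p_2,a)$ is the set of configurations with exactly $p_1$ vertices of spin $+1$ in $V^{(1)}$, exactly $p_2$ vertices of spin $+1$ in $V^{(2)}$, and exactly $a$ cross-edges both of whose endpoints have spin $+1$. $\mathcal C(p)$ is the set of configurations with exactly $p$ vertices of spin $+1$ in $V$. *)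

(* Defs.v *)
From HB Require Import structures.
From mathcomp Require Import all_boot all_order all_algebra.
Set Implicit Arguments. Unset Strict Implicit. Unset Printing Implicit Defensive.
Import Order.TTheory GRing.Theory Num.Theory.
Local Open Scope ring_scope.

(* V^(1) = {lshift n k | k < n} (vertices 1..n),
   V^(2) = {rshift n k | k < n} (vertices n+1..2n); the cross edges are
   {lshift n k, rshift n k}, i.e. {i, i+n}. *)

Definition config (n : nat) := 'I_(n + n) -> bool.

Definition spin (R : pzRingType) (b : bool) : R := if b then 1 else -1.

Definition same_block (n : nat) (i j : 'I_(n + n)) : bool := (i < n)%N == (j < n)%N.

Definition Ham (R : pzRingType) (n : nat) (eps h : R) (sigma : config n) : R :=
  - (\sum_(i < n + n) \sum_(j < n + n | ((i < j)%N && same_block i j))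
        spin R (sigma i) * spin R (sigma j))
  - eps * (\sum_(k < n) spin R (sigma (lshift n k)) * spin R (sigma (rshift n k)))
  - h * (\sum_(i < n + n) spin R (sigma i)).

Definition inC (n : nat) (p1 p2 a : nat) (sigma : config n) : Prop :=
  [/\ #|[set k : 'I_n | sigma (lshift n k)]| = p1,
      #|[set k : 'I_n | sigma (rshift n k)]| = p2 &
      #|[set k : 'I_n | sigma (lshift n k) && sigma (rshift n k)]| = a].

Definition inCp (n : nat) (p : nat) (sigma : config n) : Prop :=
  #|[set i : 'I_(n + n) | sigma i]| = p.

(* Main.v *)
Require Import Defs.
From HB Require Import structures.
From mathcomp Require Import all_boot all_order all_algebra.
From mathcomp Require Import ring lra zify.
Import Order.TTheory GRing.Theory Num.Theory.
Local Open Scope ring_scope.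


Lemma card_sumN (T : finType) (b : T -> bool) :
  (\sum_i (b i : nat))%N = #|[set i | b i]|.
Proof.
rewrite -sum1dep_card [RHS]big_mkcond /=; apply: eq_bigr => i _; by case: (b i).
Qed.

Lemma card_sumR (R : pzSemiRingType) (T : finType) (b : T -> bool) :
  \sum_i ((b i)%:R : R) = #|[set i | b i]|%:R.
Proof. by rewrite -card_sumN natr_sum. Qed.

Lemma spinE (R : comPzRingType) b : spin R b = 2 * (b : nat)%:R - 1.
Proof. by case: b => /=; rewrite /spin /=; ring. Qed.

Lemma spin2 (R : comPzRingType) b : spin R b * spin R b = 1.
Proof. by case: b; rewrite /spin /=; ring. Qed.

Lemma spinM (R : comPzRingType) a b : spin R a * spin R b =
  1 - 2 * (a : nat)%:R - 2 * (b : nat)%:R + 4 * ((a && b) : nat)%:R.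
Proof. by case: a; case: b; rewrite /spin /=; ring. Qed.

Lemma sum_spin (R : comPzRingType) (T : finType) (b : T -> bool) :
  \sum_i spin R (b i) = 2 * #|[set i | b i]|%:R - #|T|%:R.
Proof.
under eq_bigr do rewrite spinE.
rewrite sumrB -mulr_sumr card_sumR sumr_const. by rewrite -[_ *+ _]mulr_natr mul1r.
Qed.

Lemma sum_cond (R : pzSemiRingType) (T : finType) (P : pred T) (F : T -> R) :
  \sum_(j | P j) F j = \sum_j (P j : nat)%:R * F j.
Proof. rewrite big_mkcond; apply: eq_bigr => j _; case: (P j); by rewrite ?mul1r ?mul0r. Qed.

Lemma sb_sym n (i j : 'I_(n + n)) : same_block i j = same_block j i.
Proof. by rewrite /same_block eq_sym. Qed.

Lemma ind_split (R : pzSemiRingType) n (i j : 'I_(n + n)) :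
  ((same_block i j : nat)%:R : R) =
  ((((i < j)%N && same_block i j) : nat)%:R + (((j < i)%N && same_block i j) : nat)%:R
   + ((i == j) : nat)%:R).
Proof.
case: (ltngtP i j) => h.
- have -> : (i == j) = false by apply/eqP => e; move: h; rewrite e ltnn.
  by rewrite /= ?addr0 ?add0r.
- have -> : (i == j) = false by apply/eqP => e; move: h; rewrite e ltnn.
  by rewrite /= ?addr0 ?add0r.
- have e : i = j by apply: val_inj.
  by rewrite e eqxx /same_block eqxx /= !add0r.
Qed.

Lemma internal (R : comPzRingType) n (s : 'I_(n + n) -> R) :
  (forall i, s i * s i = 1) ->
  2 * (\sum_(i < n + n) \sum_(j < n + n | ((i < j)%N && same_block i j)) s i * s j)
  = (\sum_(k < n) s (lshift n k)) ^+ 2 + (\sum_(k < n) s (rshift n k)) ^+ 2 - (n + n)%:R.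
Proof.
move=> s2.
set T := \sum_(i < n + n) _.
have D1 : \sum_(i < n + n) \sum_(j < n + n | same_block i j) s i * s j
   = (\sum_(k < n) s (lshift n k)) ^+ 2 + (\sum_(k < n) s (rshift n k)) ^+ 2.
  rewrite big_split_ord /= !expr2 !mulr_suml.
  congr (_ + _); apply: eq_bigr => k _; rewrite mulr_sumr big_split_ord /=.
  - rewrite [X in _ + X]big_pred0; last first.
      by move=> l; rewrite /same_block /= ltn_ord ltnNge leq_addr.
    rewrite addr0; apply: eq_bigl => l; by rewrite /same_block /= !ltn_ord.
  - rewrite [X in X + _]big_pred0; last first.
      by move=> l; rewrite /same_block /= ltn_ord ltnNge leq_addr.
    rewrite add0r; apply: eq_bigl => l; by rewrite /same_block /= ltnNge leq_addr ltnNge leq_addr.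
have D2 : \sum_(i < n + n) \sum_(j < n + n | same_block i j) s i * s j
   = T + T + (n + n)%:R.
  have E : forall (P : 'I_(n+n) -> 'I_(n+n) -> bool),
      \sum_(i < n + n) \sum_(j < n + n | P i j) s i * s j =
      \sum_(i < n + n) \sum_(j < n + n) (P i j : nat)%:R * (s i * s j).
    by move=> P; apply: eq_bigr => i _; rewrite sum_cond.
  rewrite E /T E.
  have T' : \sum_(i < n + n) \sum_(j < n + n) (((i < j)%N && same_block i j) : nat)%:R * (s i * s j)
     = \sum_(i < n + n) \sum_(j < n + n) (((j < i)%N && same_block i j) : nat)%:R * (s i * s j).
    rewrite exchange_big; apply: eq_bigr => i _; apply: eq_bigr => j _.
    by rewrite sb_sym mulrC [s j * _]mulrC mulrC.
  rewrite {2}T'.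
  have Dg : \sum_(i < n + n) \sum_(j < n + n) ((i == j) : nat)%:R * (s i * s j) = (n + n)%:R.
    transitivity (\sum_(i < n + n) (1 : R)); last by rewrite sumr_const card_ord.
    apply: eq_bigr => i _; rewrite -sum_cond (big_pred1 i) ?s2 // => j; by rewrite /= eq_sym.
  rewrite -Dg -!big_split /=; apply: eq_bigr => i _; rewrite -!big_split /=.
  by apply: eq_bigr => j _; rewrite ind_split !mulrDl.
rewrite -D1 D2; ring.
Qed.
Set Implicit Arguments.

Definition P1 n (sigma : config n) := #|[set k : 'I_n | sigma (lshift n k)]|.
Definition P2 n (sigma : config n) := #|[set k : 'I_n | sigma (rshift n k)]|.
Definition AA n (sigma : config n) := #|[set k : 'I_n | sigma (lshift n k) && sigma (rshift n k)]|.

Lemma ham2 (R : realFieldType) n (eps : R) (sigma : config n) :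
  2 * Ham eps 0 sigma = 2 * n%:R - (2 * (P1 sigma)%:R - n%:R) ^+ 2
    - (2 * (P2 sigma)%:R - n%:R) ^+ 2
    - 2 * eps * (n%:R - 2 * (P1 sigma)%:R - 2 * (P2 sigma)%:R + 4 * (AA sigma)%:R).
Proof.
rewrite /Ham mul0r subr0.
have I := @internal R n (fun i => spin R (sigma i)) (fun i => spin2 R (sigma i)).
have C : \sum_(k < n) spin R (sigma (lshift n k)) * spin R (sigma (rshift n k))
    = n%:R - 2 * (P1 sigma)%:R - 2 * (P2 sigma)%:R + 4 * (AA sigma)%:R.
  under eq_bigr do rewrite spinM.
  rewrite big_split /= !sumrB -!mulr_sumr !card_sumR sumr_const card_ord.
  by rewrite /P1 /P2 /AA -[_ *+ _]mulr_natr mul1r.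
rewrite C.
rewrite !sum_spin card_ord in I.
rewrite mulrBr mulrN I /P1 /P2 natrD; ring.
Qed.

Lemma cardp n (sigma : config n) : #|[set i | sigma i]| = (P1 sigma + P2 sigma)%N.
Proof. by rewrite -card_sumN big_split_ord /= !card_sumN. Qed.

Lemma constr n (sigma : config n) :
  [/\ (AA sigma <= P1 sigma)%N, (AA sigma <= P2 sigma)%N &
      (P1 sigma + P2 sigma <= n + AA sigma)%N].
Proof.
split.
- by apply: subset_leq_card; apply/subsetP => k; rewrite !inE => /andP[].
- by apply: subset_leq_card; apply/subsetP => k; rewrite !inE => /andP[].
rewrite /P1 /P2 -cardsUI.
have -> : [set k : 'I_n | sigma (lshift n k)] :&: [set k | sigma (rshift n k)]
   = [set k | sigma (lshift n k) && sigma (rshift n k)].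
  by apply/setP => k; rewrite !inE.
rewrite leq_add2r /AA.
by apply: leq_trans (max_card _) _; rewrite card_ord.
Qed.

Definition mk n (b1 b2 : 'I_n -> bool) : config n :=
  fun i => match split i with inl k => b1 k | inr k => b2 k end.

Lemma mkl n b1 b2 (k : 'I_n) : mk b1 b2 (lshift n k) = b1 k.
Proof. by rewrite /mk (unsplitK (inl k)). Qed.
Lemma mkr n b1 b2 (k : 'I_n) : mk b1 b2 (rshift n k) = b2 k.
Proof. by rewrite /mk (unsplitK (inr k)). Qed.

Lemma card_lt n q : #|[set k : 'I_n | (k < q)%N]| = minn q n.
Proof.
rewrite -card_sumN -(big_mkord xpredT (fun k => ((k < q)%N : nat))).
elim: n => [|n IH]; first by rewrite big_geq // minn0.
rewrite big_nat_recr //= IH; case: (ltnP n q) => h /=; lia.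
Qed.

Lemma mk_in n p1 p2 a (b1 b2 : 'I_n -> bool) :
  #|[set k | b1 k]| = p1 -> #|[set k | b2 k]| = p2 -> #|[set k | b1 k && b2 k]| = a ->
  inC p1 p2 a (mk b1 b2).
Proof.
move=> h1 h2 h3; split.
- by rewrite -h1; apply: eq_card => k; rewrite !inE mkl.
- by rewrite -h2; apply: eq_card => k; rewrite !inE mkr.
- by rewrite -h3; apply: eq_card => k; rewrite !inE mkl mkr.
Qed.
Unset Implicit Arguments.

Lemma P1le {n} (sigma : config n) : (P1 sigma <= n)%N.
Proof. by apply: leq_trans (max_card _) _; rewrite card_ord. Qed.
Lemma P2le {n} (sigma : config n) : (P2 sigma <= n)%N.
Proof. by apply: leq_trans (max_card _) _; rewrite card_ord. Qed.

Lemma val_inC (R : realFieldType) n (eps : R) x y z (sigma : config n) :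
  inC x y z sigma ->
  2 * Ham eps 0 sigma = 2 * n%:R - (2 * x%:R - n%:R) ^+ 2
    - (2 * y%:R - n%:R) ^+ 2 - 2 * eps * (n%:R - 2 * x%:R - 2 * y%:R + 4 * z%:R).
Proof. by case=> h1 h2 h3; rewrite ham2 /P1 /P2 /AA h1 h2 h3. Qed.

Arguments val_inC {R n} eps {x y z sigma}.

Theorem proposition4p4 (R : realFieldType) (n : nat) (eps : R) (p : nat) :
  (2 <= n)%N -> -1 <= eps <= 1 -> (p <= n + n)%N ->
  let m : R :=
    if (p <= n)%N
    then n%:R - (p%:R - n%:R) ^+ 2 - p%:R ^+ 2 - eps * (n%:R - 2 * p%:R)
    else n%:R - ((n + n)%:R - p%:R) ^+ 2 - (p%:R - n%:R) ^+ 2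
           - eps * (2 * p%:R - 3 * n%:R) in
  (* m is the minimum of H (with h = 0) over \mathcal C(p) *)
  ((exists sigma : config n, inCp p sigma /\ Ham eps 0 sigma = m) /\
   (forall sigma : config n, inCp p sigma -> m <= Ham eps 0 sigma)) /\
  (* attained on C(p,0,0) and C(0,p,0) for p <= n *)
  ((p <= n)%N ->
     ((exists sigma : config n, inC p 0 0 sigma) /\
      (forall sigma : config n, inC p 0 0 sigma -> Ham eps 0 sigma = m)) /\
     ((exists sigma : config n, inC 0 p 0 sigma) /\
      (forall sigma : config n, inC 0 p 0 sigma -> Ham eps 0 sigma = m))) /\
  (* attained on C(n,p-n,p-n) and C(p-n,n,p-n) for n <= p <= 2n *)
  ((n <= p)%N ->
     ((exists sigma : config n, inC n (p - n) (p - n) sigma) /\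
      (forall sigma : config n, inC n (p - n) (p - n) sigma -> Ham eps 0 sigma = m)) /\
     ((exists sigma : config n, inC (p - n) n (p - n) sigma) /\
      (forall sigma : config n, inC (p - n) n (p - n) sigma -> Ham eps 0 sigma = m))).
Proof.
move=> hn /andP[he1 he2] hp m.
have two : (2 : R) != 0 by rewrite pnatr_eq0.
have E1 : (p <= n)%N -> exists sigma : config n, inC p 0 0 sigma.
  move=> h; exists (mk (fun k => (k < p)%N) (fun k => (k < 0)%N)).
  apply: mk_in; rewrite ?card_lt; try lia.
  by apply: eq_card0 => k; rewrite !inE andbF.
have E2 : (p <= n)%N -> exists sigma : config n, inC 0 p 0 sigma.
  move=> h; exists (mk (fun k => (k < 0)%N) (fun k => (k < p)%N)).
  apply: mk_in; rewrite ?card_lt; try lia.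
  by apply: eq_card0 => k; rewrite !inE andFb.
have E3 : (n <= p)%N -> exists sigma : config n, inC n (p - n) (p - n) sigma.
  move=> h; exists (mk (fun k => (k < n)%N) (fun k => (k < p - n)%N)).
  apply: mk_in; rewrite ?card_lt; try lia.
  rewrite -[RHS](_ : minn (p - n) n = (p - n)%N); last by lia.
  by rewrite -card_lt; apply: eq_card => k; rewrite !inE ltn_ord.
have E4 : (n <= p)%N -> exists sigma : config n, inC (p - n) n (p - n) sigma.
  move=> h; exists (mk (fun k => (k < p - n)%N) (fun k => (k < n)%N)).
  apply: mk_in; rewrite ?card_lt; try lia.
  rewrite -[RHS](_ : minn (p - n) n = (p - n)%N); last by lia.
  by rewrite -card_lt; apply: eq_card => k; rewrite !inE ltn_ord andbT.
have inCp_of x y z (sigma : config n) : inC x y z sigma -> (x + y = p)%N -> inCp p sigma.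
  by case=> h1 h2 _ e; rewrite /inCp cardp /P1 /P2 h1 h2.
have V1 : (p <= n)%N -> forall sigma : config n, inC p 0 0 sigma -> Ham eps 0 sigma = m.
  move=> h sigma /(val_inC eps) H; apply: (mulfI two); rewrite H /m h; ring.
have V2 : (p <= n)%N -> forall sigma : config n, inC 0 p 0 sigma -> Ham eps 0 sigma = m.
  move=> h sigma /(val_inC eps) H; apply: (mulfI two); rewrite H /m h; ring.
have V3 : (n <= p)%N -> forall sigma : config n, inC n (p - n) (p - n) sigma -> Ham eps 0 sigma = m.
  move=> h sigma /(val_inC eps) H; apply: (mulfI two); rewrite H /m natrB // natrD.
  case: ifP => h'; last by ring.
  have -> : p = n by lia.
  ring.
have V4 : (n <= p)%N -> forall sigma : config n, inC (p - n) n (p - n) sigma -> Ham eps 0 sigma = m.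
  move=> h sigma /(val_inC eps) H; apply: (mulfI two); rewrite H /m natrB // natrD.
  case: ifP => h'; last by ring.
  have -> : p = n by lia.
  ring.
split; last first.
  split.
    move=> h; split; split; [exact: E1 | exact: V1 | exact: E2 | exact: V2].
  move=> h; split; split; [exact: E3 | exact: V3 | exact: E4 | exact: V4].
split.
  case: (leqP p n) => h.
    have [sigma hs] := E1 h; exists sigma; split; first by apply: inCp_of hs _; lia.
    exact: V1.
  have h' : (n <= p)%N by lia.
  have [sigma hs] := E3 h'; exists sigma; split; first by apply: inCp_of hs _; lia.
  exact: V3.
move=> sigma hs.
have hp12 := cardp sigma; rewrite hs in hp12.
have [c1 c2 c3] := constr sigma.
have l1 := P1le sigma; have l2 := P2le sigma.
have H := @ham2 R n eps sigma.
move: c1 c2 c3 l1 l2 H hp12.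
set x := P1 sigma; set y := P2 sigma; set z := AA sigma.
move=> c1 c2 c3 l1 l2 H hp12.
rewrite -(ler_pM2l (_ : (0 : R) < 2)) //; rewrite H /m.
case: ifP => h.
  have N : (z <= x * y)%N by nia.
  have NR : (z%:R <= x%:R * y%:R :> R) by rewrite -natrM ler_nat.
  have Z : 0 <= (1 - eps) * z%:R by apply: mulr_ge0; rewrite ?subr_ge0 ?ler0n.
  have -> : p = (x + y)%N by [].
  rewrite natrD. nra.
have N : (n + z - x - y <= (n - x) * (n - y))%N by nia.
have NR : ((n + z - x - y)%N%:R <= (n - x)%N%:R * (n - y)%N%:R :> R) by rewrite -natrM ler_nat.
have Z : 0 <= (1 - eps) * (n + z - x - y)%N%:R.
  by apply: mulr_ge0; rewrite ?subr_ge0 ?ler0n.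
have ec : (n + z - x - y)%N%:R = n%:R + z%:R - x%:R - y%:R :> R.
  rewrite -!natrD -!natrB //; lia.
have e1 : (n - x)%N%:R = n%:R - x%:R :> R by rewrite natrB.
have e2 : (n - y)%N%:R = n%:R - y%:R :> R by rewrite natrB.
rewrite ec e1 e2 in NR Z.
have -> : p = (x + y)%N by [].
rewrite !natrD. nra.
Qed.
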